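(* Let $n\ge 1$, let $X\in\mathbb{R}^{n\times n}$ be a symmetric positive definite matrix, let $\Delta T>0$, and for each $i\in\{1,\dots,n\}$ let $\underline{v}_i\le \bar{v}_i$ be real numbers. Consider the closed-loop discrete-time voltage dynamics $$\mathbf{v}(t+1)=\mathbf{v}(t)+\Delta T\, X\,\mathbf{u}(t),\qquad u_i(t)=-g_i(v_i(t)),\quad i=1,\dots,n,\; t=0,1,2,\dots,$$ where each $g_i:\mathbb{R}\to\mathbb{R}$ is continuously differentiable and satisfies $g_i(v_i)=0$ for all $v_i\in[\underline{v}_i,\bar{v}_i]$. Let $\frac{\partial \mathbf{u}}{\partial \mathbf{v}}=-\mathrm{diag}\big(g_1'(v_1),\dots,g_n'(v_n)\big)$. Suppose that, for $v_i$ in $(-\infty,\underline{v}_i]$ and in $[\bar{v}_i,\infty)$ (for each $i$), the derivatives satisfy the matrix inequality $$-\frac{2}{\Delta T}X^{-1}\prec \frac{\partial \mathbf{u}}{\partial \mathbf{v}}\prec 0,$$ and that $\lim_{|v_i|\to\infty}|g_i(v_i)|=\infty$ for every $i$. Then the closed-loop system is voltage stable: for every initial condition $\mathbf{v}(0)\in\mathbb{R}^n$ (and every uncontrollable component $\mathbf{v}^{env}$ of the voltage), $\lim_{t\to\infty}\mathrm{dist}(\mathbf{v}(t),S_v)=0$, where $S_v=\{\mathbf{v}\in\mathbb{R}^n:\underline{v}_i\le v_i\le \bar{v}_i\ \forall i\}$ and $\mathrm{dist}(\mathbf{v},S_v)=\min_{\mathbf{v}'\in S_v}\|\mathbf{v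}-\mathbf{v}'\|$.
   Context: This models voltage control in a (single-phase or three-phase) radial distribution network under the linearized branch flow model $\mathbf{v}=X\mathbf{q}+\mathbf{v}^{env}$, where $\mathbf{v}$ is the vector of squared voltage magnitudes, $\mathbf{q}$ the reactive power injections, $X$ the (positive definite) reactance-based sensitivity matrix, and $\mathbf{v}^{env}$ the uncontrollable part determined by active power injections and the substation voltage. The control $u_i$ is the change of reactive power injection at bus $i$ per step, $q_i(t+1)=q_i(t)+u_i(t)$, computed in a decentralized way from the local voltage $v_i$ only; $\Delta T$ is the sampling time (zero-order hold discretization of $\dot{\mathbf{v}}=X\mathbf{u}$). For symmetric matrices, $A\prec B$ means $B-A$ is positive definite. *)

(* Defs.v *)
From HB Require Import structures.
From mathcomp Require Import all_boot all_order all_algebra.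
From mathcomp Require Import all_classical all_reals all_analysis.
Set Implicit Arguments. Unset Strict Implicit. Unset Printing Implicit Defensive.
Import Order.TTheory GRing.Theory Num.Theory.
Import numFieldNormedType.Exports.
Local Open Scope ring_scope.
Local Open Scope classical_set_scope.

Definition posdef {R : realType} {n : nat} (A : 'M[R]_n) : Prop :=
  A^T = A /\ forall x : 'cV[R]_n, x != 0 -> 0 < (x^T *m A *m x) ord0 ord0.

Definition loewner_lt {R : realType} {n : nat} (A B : 'M[R]_n) : Prop :=
  posdef (B - A).

Definition C1 {R : realType} (g : R -> R) : Prop :=
  (forall x : R, derivable g x 1) /\ continuous (g^`()).

Definition enorm {R : realType} {n : nat} (v : 'cV[R]_n) : R :=
  Num.sqrt (\sum_i (v i ord0) ^+ 2).

Definition Sv {R : realType} {n : nat} (vlo vhi : 'I_n -> R) : set 'cV[R]_n :=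
  [set w | forall i, vlo i <= w i ord0 <= vhi i].

(* dist(v, S_v) = min_{v' in S_v} ||v - v'|| (written as the infimum; the
   minimum is attained since S_v is closed and nonempty). *)
Definition dist_Sv {R : realType} {n : nat} (vlo vhi : 'I_n -> R)
  (v : 'cV[R]_n) : R :=
  inf [set enorm (v - w) | w in Sv vlo vhi].

Definition ctrl {R : realType} {n : nat} (g : 'I_n -> R -> R)
  (v : 'cV[R]_n) : 'cV[R]_n := \col_i (- g i (v i ord0)).

Definition dudv {R : realType} {n : nat} (g : 'I_n -> R -> R)
  (v : 'cV[R]_n) : 'M[R]_n :=
  - diag_mx (\row_i ((g i)^`() (v i ord0))).

(* Main.v *)
Require Import Defs.
From HB Require Import structures.
From mathcomp Require Import all_boot all_order all_algebra.
From mathcomp Require Import all_classical all_reals all_analysis.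
From mathcomp Require Import ring lra.
Import Order.TTheory GRing.Theory Num.Theory.
Import numFieldNormedType.Exports.
Local Open Scope ring_scope.
Local Open Scope classical_set_scope.

Section Alg.
Variables (R : realType) (n : nat).
Implicit Types (a b e G y z : 'cV[R]_n) (A X Xi : 'M[R]_n).

Lemma dotE a b : (a^T *m b) ord0 ord0 = \sum_i a i ord0 * b i ord0.
Proof. by rewrite !mxE; apply: eq_bigr => i _; rewrite mxE. Qed.

Lemma dotC a b : (a^T *m b) ord0 ord0 = (b^T *m a) ord0 ord0.
Proof. by rewrite !dotE; apply: eq_bigr => i _; rewrite mulrC. Qed.

Lemma quadE A a b : (a^T *m A *m b) ord0 ord0 =
  \sum_i \sum_j a i ord0 * A i j * b j ord0.
Proof.
rewrite -mulmxA dotE; apply: eq_bigr => i _; rewrite mxE big_distrr /=.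
by apply: eq_bigr => j _; rewrite mulrA.
Qed.

Lemma quad_diag (d : 'rV[R]_n) y :
  (y^T *m diag_mx d *m y) ord0 ord0 = \sum_i d ord0 i * y i ord0 ^+ 2.
Proof.
rewrite quadE; apply: eq_bigr => i _.
rewrite (bigD1 i) //= big1 ?addr0; last first.
  by move=> j /negbTE ji; rewrite mxE eq_sym ji mulr0n mulr0 mul0r.
by rewrite mxE eqxx mulr1n expr2; ring.
Qed.

Lemma quad_expand X Xi e G c : X^T = X -> X *m Xi = 1%:M -> Xi *m X = 1%:M ->
  ((e - c *: (X *m G))^T *m Xi *m (e - c *: (X *m G))) ord0 ord0 =
  (e^T *m Xi *m e) ord0 ord0 - 2 * c * (G^T *m e) ord0 ord0
   + c ^+ 2 * (G^T *m X *m G) ord0 ord0.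
Proof.
move=> hX h1 h2.
have -> : (e - c *: (X *m G))^T = e^T - c *: (G^T *m X).
  by rewrite raddfB /= linearZ /= trmx_mul hX.
idtac.
rewrite !(mulmxBl, mulmxBr) -!scalemxAl -!scalemxAr.
have E1 : G^T *m X *m Xi *m e = G^T *m e by rewrite -(mulmxA G^T) h1 mulmx1.
have E2 : e^T *m Xi *m (X *m G) = e^T *m G by rewrite -mulmxA (mulmxA Xi) h2 mul1mx.
have E3 : G^T *m X *m Xi *m (X *m G) = G^T *m X *m G.
  by rewrite -(mulmxA G^T) h1 mulmx1 mulmxA.
rewrite E1 E2 E3.
have E4 := dotC e G.
set p1 := e^T *m Xi *m e in E4 *; set p2 := G^T *m e in E4 *; set p3 := G^T *m X *m G.
set p4 := e^T *m G in E4 *.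
rewrite !mxE.
have -> : \sum_j e^T ord0 j * G j ord0 = \sum_j G^T ord0 j * e j ord0.
  by apply: eq_bigr => j _; rewrite !mxE mulrC.
ring.
Qed.

Lemma posdef_ge0 A y : posdef A -> 0 <= (y^T *m A *m y) ord0 ord0.
Proof.
move=> [_ hA]; have [->|y0] := eqVneq y 0.
  by rewrite mulmx0 mxE.
exact/ltW/hA.
Qed.

Lemma posdef_unit X : posdef X -> X \in unitmx.
Proof.
move=> [hX hp]; rewrite unitmxE unitfE; apply/negP => /det0P [r r0 rX].
have x0 : r^T != 0 by rewrite trmx_eq0.
have := hp _ x0; rewrite trmxK -mulmxA.
have -> : X *m r^T = 0 by rewrite -[X]hX -trmx_mul rX linear0.
by rewrite mulmx0 mxE ltxx.
Qed.

Lemma invmx_props X : posdef X ->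
  [/\ X *m invmx X = 1%:M, invmx X *m X = 1%:M & (invmx X)^T = invmx X].
Proof.
move=> hX; have u := posdef_unit X hX.
by split; [exact: mulmxV | exact: mulVmx | rewrite trmx_inv hX.1].
Qed.

Lemma Xi_ge0 X z : posdef X -> 0 <= (z^T *m invmx X *m z) ord0 ord0.
Proof.
move=> hX; have [h1 h2 h3] := invmx_props X hX.
have -> : z^T *m invmx X *m z = (invmx X *m z)^T *m X *m (invmx X *m z).
  rewrite trmx_mul h3 -!mulmxA (mulmxA X) h1 mul1mx //.
exact: posdef_ge0 X _ hX.
Qed.

Lemma quad_delta A i :
  ((@delta_mx R n 1 i ord0)^T *m A *m @delta_mx R n 1 i ord0) ord0 ord0 = A i i.
Proof.
rewrite quadE (bigD1 i) //= [X in _ + X]big1 => [|j ji]; last first.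
  by rewrite big1 // => k _; rewrite !mxE (negbTE ji) /= !mul0r.
rewrite addr0 (bigD1 i) //= [X in _ + X]big1 => [|k ki]; last first.
  by rewrite !mxE (negbTE ki) /= mulr0.
by rewrite !mxE !eqxx /= addr0 mul1r mulr1.
Qed.

Lemma dot_delta z i : ((@delta_mx R n 1 i ord0)^T *m z) ord0 ord0 = z i ord0.
Proof.
rewrite dotE (bigD1 i) //= big1 ?addr0; first by rewrite !mxE !eqxx mul1r.
by move=> k ki; rewrite !mxE (negbTE ki) mul0r.
Qed.

Lemma CS_bound X z i : posdef X ->
  z i ord0 ^+ 2 <= X i i * (z^T *m invmx X *m z) ord0 ord0.
Proof.
move=> hX; have [h1 h2 h3] := invmx_props X hX.
pose d := @delta_mx R n 1 i ord0.
have Xii : 0 < X i i.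
  have d0 : d != 0.
    apply/negP => /eqP /matrixP /(_ i ord0); rewrite !mxE !eqxx /=.
    by move/eqP; rewrite oner_eq0.
  by have := hX.2 _ d0; rewrite quad_delta.
have dz := dot_delta z i.
have dXd := quad_delta X i.
have := Xi_ge0 X (z - (z i ord0 / X i i) *: (X *m d)) hX.
rewrite quad_expand // ?hX.1 // dz dXd.
set N := (z^T *m invmx X *m z) ord0 ord0.
move=> h.
have : 0 <= X i i * N - z i ord0 ^+ 2.
  have -> : X i i * N - z i ord0 ^+ 2 =
     X i i * (N - 2 * (z i ord0 / X i i) * z i ord0 + (z i ord0 / X i i) ^+ 2 * X i i).
    by field; rewrite gt_eqF.
  exact: mulr_ge0 (ltW Xii) h.
by rewrite subr_ge0.
Qed.
End Alg.

Section Coord.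
Variable R : realType.

Lemma C1_cont (g : R -> R) : C1 g -> continuous g.
Proof.
move=> [hd _] x; apply: differentiable_continuous.
exact/derivable1_diffP.
Qed.

Lemma C1_MVT (g : R -> R) a b : C1 g -> a < b ->
  exists2 c, a < c < b & g b - g a = derive1 g c * (b - a).
Proof.
move=> hg ab.
have [c cab h] := @MVT R g (derive1 g) a b ab
  (fun x _ => ltac:(rewrite derive1E; exact: derivableP (hg.1 x)))
  (ltac:(apply: continuous_subspaceT; exact: C1_cont g hg)).
by exists c => //; move: cab; rewrite in_itv.
Qed.

Lemma coord_step (g : R -> R) lo hi x : lo <= hi -> C1 g ->
  (forall x, lo <= x <= hi -> g x = 0) ->
  (forall z, z < lo \/ hi < z -> 0 < derive1 g z) ->
  exists eta, (eta < lo \/ hi < eta) /\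
    (forall y, 2 * g x * y - derive1 g eta * y ^+ 2 <= g x * (x - lo)) /\
    (x < lo \/ hi < x -> g x != 0).
Proof.
move=> lohi hg g0 gpos.
have [xlo|lox] := ltP x lo.
  have [c /andP[xc clo] h] := C1_MVT g _ _ hg xlo.
  have d0 : 0 < derive1 g c by apply: gpos; left.
  have gl : g lo = 0 by apply: g0; rewrite lexx lohi.
  have gx : g x = derive1 g c * (x - lo) by move: h; rewrite gl => h; lra.
  exists c; split; first by left.
  split.
    move=> y; rewrite gx.
    have : 0 <= derive1 g c * (x - lo - y) ^+ 2 by apply: mulr_ge0; [exact: ltW | exact: sqr_ge0].
    lra.
  by move=> _; rewrite gx mulf_neq0 ?(gt_eqF d0) // ltr0_neq0 // subr_lt0.
have [hix|xhi] := ltP hi x.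
  have [c /andP[hic cx] h] := C1_MVT g _ _ hg hix.
  have d0 : 0 < derive1 g c by apply: gpos; right.
  have gh : g hi = 0 by apply: g0; rewrite lexx lohi.
  have gx : g x = derive1 g c * (x - hi) by move: h; rewrite gh => h; lra.
  exists c; split; first by right.
  split.
    move=> y; rewrite gx.
    have : 0 <= derive1 g c * (x - hi - y) ^+ 2 by apply: mulr_ge0; [exact: ltW | exact: sqr_ge0].
    have : 0 <= derive1 g c * (x - hi) * (hi - lo).
      by apply: mulr_ge0; [apply: mulr_ge0; lra | lra].
    nra.
  by move=> _; rewrite gx mulf_neq0 ?gt_eqF // subr_gt0.
have gx : g x = 0 by apply: g0; rewrite lox xhi.
exists (hi + 1); split; first by right; lra.
split; last by case; lra.
move=> y; rewrite gx.
have : 0 < derive1 g (hi + 1) by apply: gpos; right; lra.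
have := sqr_ge0 y.
nra.
Qed.
End Coord.

Section Cont.
Variable R : realType.

Lemma cont_sum (T : topologicalType) (I : Type) (s : seq I) (f : I -> T -> R) :
  (forall i, continuous (f i)) -> continuous (fun x => \sum_(i <- s) f i x).
Proof.
move=> hf; elim: s => [|a s IH] x.
  have -> : (fun x => \sum_(i <- [::]) f i x) = fun=> 0.
    by apply: funext => y; rewrite big_nil.
  exact: cvg_cst.
have -> : (fun x => \sum_(i <- a :: s) f i x) =
          (f a + fun x => \sum_(i <- s) f i x)%R.
  by apply: funext => y; rewrite big_cons.
by apply: cvgD; [exact: hf | exact: IH].
Qed.

Lemma cont_mul (T : topologicalType) (f h : T -> R) :
  continuous f -> continuous h -> continuous (fun x => f x * h x).
Proof. by move=> hf hh x; apply: cvgM; [exact: hf | exact: hh]. Qed.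

Lemma cont_sub (T : topologicalType) (f h : T -> R) :
  continuous f -> continuous h -> continuous (fun x => f x - h x).
Proof. by move=> hf hh x; apply: cvgB; [exact: hf | exact: hh]. Qed.

Lemma cont_cst (T : topologicalType) (c : R) : continuous (fun _ : T => c).
Proof. by move=> x; exact: cvg_cst. Qed.

Lemma cont_coord n (h : R -> R) i : continuous h ->
  continuous (fun r : 'rV[R]_n => h (r ord0 i)).
Proof.
move=> hh r; apply: (@continuous_comp _ _ _ (fun r : 'rV[R]_n => r ord0 i) h).
  exact: coord_continuous.
exact: hh.
Qed.
End Cont.

Section Main.
Variables (R : realType) (n : nat) (X : 'M[R]_n) (dT : R)
  (vlo vhi : 'I_n -> R) (g : 'I_n -> R -> R).
Hypothesis hX : posdef X.
Hypothesis hdT : 0 < dT.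
Hypothesis hlh : forall i, vlo i <= vhi i.
Hypothesis hC1 : forall i, C1 (g i).
Hypothesis hg0 : forall i x, vlo i <= x <= vhi i -> g i x = 0.
Hypothesis hL : forall v : 'cV[R]_n,
     (forall i, v i ord0 < vlo i \/ vhi i < v i ord0) ->
     loewner_lt (- (2 / dT) *: invmx X) (dudv g v) /\
     loewner_lt (dudv g v) 0.

Definition Gv (v : 'cV[R]_n) : 'cV[R]_n := \col_i g i (v i ord0).
Definition sv : 'cV[R]_n := \col_i vlo i.
Definition Fv (v : 'cV[R]_n) : R :=
  2 * dT * ((Gv v)^T *m (v - sv)) ord0 ord0 - dT ^+ 2 * ((Gv v)^T *m X *m Gv v) ord0 ord0.
Definition Nv (v : 'cV[R]_n) : R := ((v - sv)^T *m invmx X *m (v - sv)) ord0 ord0.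

Lemma gpos i z : z < vlo i \/ vhi i < z -> 0 < derive1 (g i) z.
Proof.
move=> hz.
pose eta : 'cV[R]_n := \col_j (if j == i then z else vhi j + 1).
have heta : forall j, eta j ord0 < vlo j \/ vhi j < eta j ord0.
  move=> j; rewrite /eta mxE; case: eqP => [->//|_]; right; lra.
have [_ [_ hp]] := hL _ heta.
pose d := @delta_mx R n 1 i ord0.
have d0 : d != 0.
  apply/negP => /eqP /matrixP /(_ i ord0); rewrite !mxE !eqxx /=.
  by move/eqP; rewrite oner_eq0.
have := hp _ d0; rewrite quad_delta.
by rewrite /dudv sub0r opprK mxE eqxx mulr1n mxE /eta (mxE _ (fun j _ => if j == i then z else vhi j + 1)) eqxx.
Qed.

Lemma Nv_step v : Nv (v + dT *: (X *m ctrl g v)) = Nv v - Fv v.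
Proof.
have [h1 h2 h3] := @invmx_props _ _ X hX.
rewrite /Nv.
have -> : v + dT *: (X *m ctrl g v) - sv = (v - sv) - dT *: (X *m Gv v).
  have -> : ctrl g v = - Gv v by apply/matrixP => i j; rewrite !mxE.
  by rewrite mulmxN scalerN addrAC.
rewrite quad_expand // ?hX.1 //.
rewrite /Fv; ring.
Qed.

Lemma Nv_ge0 v : 0 <= Nv v.
Proof. exact: Xi_ge0 _ _ _ _ hX. Qed.

Lemma Fv_pos v : 0 <= Fv v /\
  ((exists i, v i ord0 < vlo i \/ vhi i < v i ord0) -> 0 < Fv v).
Proof.
have h0 := hdT.
have [h1 h2 h3] := @invmx_props _ _ X hX.
have hc : forall i, exists eta, (eta < vlo i \/ vhi i < eta) /\
    (forall y, 2 * g i (v i ord0) * y - derive1 (g i) eta * y ^+ 2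
               <= g i (v i ord0) * (v i ord0 - vlo i)) /\
    (v i ord0 < vlo i \/ vhi i < v i ord0 -> g i (v i ord0) != 0).
  move=> i; exact: (@coord_step R (g i) (vlo i) (vhi i) (v i ord0) (hlh i) (hC1 i) (hg0 i) (gpos i)).
have [f hf] := choice hc.
pose eta : 'cV[R]_n := \col_i f i.
have heta : forall i, eta i ord0 < vlo i \/ vhi i < eta i ord0.
  by move=> i; rewrite mxE; exact: (hf i).1.
have [hQ _] := hL _ heta.
set G := Gv v.
set P := (G^T *m X *m G) ord0 ord0.
pose k := dT / 2.
pose y := k *: (X *m G).
pose S := \sum_i derive1 (g i) (f i) * y i ord0 ^+ 2.
have hyXy : y^T *m invmx X *m y = k ^+ 2 *: (G^T *m X *m G).
  have yT : y^T = k *: (G^T *m X) by rewrite /y [(_ *: _)^T]linearZ /= trmx_mul hX.1.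
  rewrite yT /y -!scalemxAl -scalemxAr scalerA -expr2.
  by rewrite -!mulmxA (mulmxA (invmx X)) h2 mul1mx mulmxA.
have hGy : G^T *m y = k *: (G^T *m X *m G).
  by rewrite /y -scalemxAr mulmxA.
have hq : (y^T *m (dudv g eta - - (2 / dT) *: invmx X) *m y) ord0 ord0
          = dT / 2 * P - S.
  rewrite scaleNr opprK /dudv mulmxDr mulmxDl mxE mulmxN mulNmx mxE quad_diag.
  have -> : y^T *m ((2/dT) *: invmx X) *m y = (2/dT) *: (y^T *m invmx X *m y).
    by rewrite scalemxAl scalemxAr.
  rewrite mxE hyXy mxE /S /P /k.
  have -> : \sum_i (\row_i derive1 (g i) (eta i ord0)) ord0 i * y i ord0 ^+ 2 =
            \sum_i derive1 (g i) (f i) * y i ord0 ^+ 2.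
    by apply: eq_bigr => i _; rewrite !mxE.
  field; exact: lt0r_neq0.
have hD : dT * P - S <= (G^T *m (v - sv)) ord0 ord0.
  have -> : dT * P - S = 2 * (G^T *m y) ord0 ord0 - S.
    by rewrite hGy mxE /k /P; field.
  rewrite !dotE /S mulr_sumr -sumrB.
  apply: ler_sum => i _.
  have := (hf i).2.1 (y i ord0).
  by rewrite /G /Gv /sv !mxE [2 * (_ * _)]mulrA.
have hq0 := posdef_ge0 _ _ _ y hQ.
rewrite hq in hq0.
have hF : 2 * dT * (dT / 2 * P - S) <= Fv v.
  rewrite /Fv -/G -/P.
  have : 0 <= 2 * dT * ((G^T *m (v - sv)) ord0 ord0 - (dT * P - S)).
    by apply: mulr_ge0; [lra | rewrite subr_ge0].
  have -> : 2 * dT * (dT / 2 * P - S) = dT ^+ 2 * P - 2 * dT * S.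
    by field.
  move=> h; have -> : dT ^+ 2 * P = dT * (dT * P) by rewrite expr2 mulrA.
  nra.
split.
  apply: le_trans hF; apply: mulr_ge0 => //; lra.
move=> [i hi].
have Gi : G i ord0 != 0 by rewrite /G /Gv mxE; exact: (hf i).2.2.
have y0 : y != 0.
  apply/negP => /eqP y0.
  have XG0 : X *m G = 0.
    move: y0; rewrite /y => /eqP; rewrite scaler_eq0 => /orP [|/eqP //].
    by rewrite /k mulf_eq0 invr_eq0 (gt_eqF hdT) /= pnatr_eq0.
  have : G = 0 by rewrite -[G]mul1mx -h2 -mulmxA XG0 mulmx0.
  by move/matrixP/(_ i ord0); rewrite [RHS]mxE => h; move: Gi; rewrite h eqxx.
have := hQ.2 y y0; rewrite hq => hpos.
apply: lt_le_trans hF; apply: mulr_gt0 => //; lra.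
Qed.


Lemma Fv_sum v : Fv v = 2 * dT * \sum_i g i (v i ord0) * (v i ord0 - vlo i)
  - dT ^+ 2 * \sum_i \sum_j g i (v i ord0) * X i j * g j (v j ord0).
Proof.
rewrite /Fv dotE quadE; congr (_ * _ - _ * _).
  by apply: eq_bigr => i _; rewrite !mxE.
by apply: eq_bigr => i _; apply: eq_bigr => j _; rewrite !mxE.
Qed.

Lemma Phi_cont : continuous (fun r : 'rV[R]_n => Fv r^T).
Proof.
have -> : (fun r : 'rV[R]_n => Fv r^T) = fun r =>
   2 * dT * \sum_i g i (r ord0 i) * (r ord0 i - vlo i)
  - dT ^+ 2 * \sum_i \sum_j g i (r ord0 i) * X i j * g j (r ord0 j).
  apply: funext => r; rewrite Fv_sum; congr (_ * _ - _ * _).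
    by apply: eq_bigr => i _; rewrite !mxE.
  by apply: eq_bigr => i _; apply: eq_bigr => j _; rewrite !mxE.
have gc i : continuous (fun r : 'rV[R]_n => g i (r ord0 i)).
  exact: (@cont_coord R n (g i) i (@C1_cont R (g i) (hC1 i))).
apply: cont_sub; apply: cont_mul; try exact: cont_cst.
  apply: cont_sum => i; apply: cont_mul => //.
  apply: cont_sub; [exact: coord_continuous | exact: cont_cst].
apply: cont_sum => i; apply: cont_sum => j; apply: cont_mul => //.
by apply: cont_mul => //; exact: cont_cst.
Qed.

Lemma Nv_mono (v : nat -> 'cV[R]_n) :
  (forall t, v t.+1 = v t + dT *: (X *m ctrl g (v t))) ->
  forall t k, Nv (v (t + k)%N) <= Nv (v t).
Proof.
move=> hv t; elim => [|k IH]; first by rewrite addn0.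
rewrite addnS hv Nv_step; apply: le_trans IH.
by rewrite lerBlDr lerDl; case: (Fv_pos (v (t + k)%N)).
Qed.

Lemma avoid (P : 'cV[R]_n -> Prop) m : 0 < m -> (forall w, P w -> m <= Fv w) ->
  forall v : nat -> 'cV[R]_n,
  (forall t, v t.+1 = v t + dT *: (X *m ctrl g (v t))) ->
  exists T, forall t, (T <= t)%N -> ~ P (v t).
Proof.
move=> m0 hP v hv.
have [//|H] := pselect (exists T, forall t, (T <= t)%N -> ~ P (v t)).
have inf_often : forall T, exists t, (T <= t)%N /\ P (v t).
  move=> T; have [//|H2] := pselect (exists t, (T <= t)%N /\ P (v t)).
  exfalso; apply: H; exists T => t Tt Pt; apply: H2; by exists t.
have claim : forall k : nat, exists t, Nv (v t) <= Nv (v 0) - k%:R * m.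
  elim => [|k [t ht]]; first by exists 0%N; rewrite mul0r subr0.
  have [t' [tt' Pt']] := inf_often t.
  exists t'.+1; rewrite hv Nv_step.
  have := hP _ Pt'.
  have := Nv_mono _ hv t (t' - t)%N; rewrite subnKC //.
  rewrite -natr1 mulrDl mul1r; lra.
have [t ht] := claim (Num.Def.trunc (Nv (v 0) / m)).+1.
have := truncnS_gt (Nv (v 0) / m).
have := Nv_ge0 (v t).
move=> h1 h2.
have : Nv (v 0) < (Num.Def.trunc (Nv (v 0) / m)).+1%:R * m.
  by rewrite -ltr_pdivrMr.
lra.
Qed.

Lemma enorm_le (w : 'cV[R]_n) : enorm w <= \sum_i `|w i ord0|.
Proof.
rewrite /enorm.
have s0 : 0 <= \sum_i `|w i ord0| by apply: sumr_ge0 => i _.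
have h : \sum_i w i ord0 ^+ 2 <= (\sum_i `|w i ord0|) ^+ 2.
  rewrite expr2 mulr_suml; apply: ler_sum => i _.
  rewrite -real_normK ?num_real // expr2; apply: ler_wpM2l => //.
  rewrite (bigD1 i) //= lerDl; by apply: sumr_ge0 => j _.
apply: le_trans (ler_wsqrtr h) _.
by rewrite sqrtr_sqr ger0_norm.
Qed.

Lemma Xii_pos i : 0 < X i i.
Proof.
pose d := @delta_mx R n 1 i ord0.
have d0 : d != 0.
  apply/negP => /eqP /matrixP /(_ i ord0); rewrite !mxE !eqxx /=.
  by move/eqP; rewrite oner_eq0.
by have := hX.2 _ d0; rewrite quad_delta.
Qed.

Lemma bound_coord (v : nat -> 'cV[R]_n) :
  (forall t, v t.+1 = v t + dT *: (X *m ctrl g (v t))) ->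
  forall t i, - (`|vlo i| + X i i * Nv (v 0%N) + 1) <= v t i ord0 <= `|vlo i| + X i i * Nv (v 0%N) + 1.
Proof.
move=> hv t i.
have h1 := @CS_bound R n X (v t - sv) i hX.
have h2 := Nv_mono _ hv 0 t; rewrite add0n in h2.
have hx := Xii_pos i.
have h3 : (v t - sv) i ord0 ^+ 2 <= X i i * Nv (v 0%N).
  apply: le_trans h1 _; apply: ler_wpM2l => //; exact: ltW.
move: h3; rewrite !mxE.
set w := v t i ord0; set K := X i i * Nv (v 0%N).
have := ler_norm (vlo i); have := ler_normr (vlo i).
have := normr_ge0 (vlo i).
rewrite ler_normr.
set a := `|vlo i|.
move=> a0 _ hva.
move=> hw.
have hs : 0 <= (w - vlo i - 1/2) ^+ 2 by exact: sqr_ge0.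
have hs' : 0 <= (w - vlo i + 1/2) ^+ 2 by exact: sqr_ge0.
have ha : - a <= vlo i <= a by rewrite -ler_norml.
nra.
Qed.

Lemma main_conv (v : nat -> 'cV[R]_n) : (0 < n)%N ->
  (forall t, v t.+1 = v t + dT *: (X *m ctrl g (v t))) ->
  (fun t => dist_Sv vlo vhi (v t)) @ \oo --> 0.
Proof.
move=> n0 hv.
pose Bd i := `|vlo i| + X i i * Nv (v 0%N) + 1.
have hB : forall t i, - Bd i <= v t i ord0 <= Bd i by exact: bound_coord.
apply/cvgr0Pnorm_lt => e e0.
pose eps := e / (n.+1)%:R.
have eps0 : 0 < eps by rewrite /eps divr_gt0 // ltr0n.
pose A (p : 'I_n * bool) (j : 'I_n) : set R :=
  if j == p.1 then (if p.2 then `[vhi j + eps, Bd j] else `[- Bd j, vlo j - eps])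
  else `[- Bd j, Bd j].
pose P (p : 'I_n * bool) : set 'rV[R]_n := [set r | forall j, A p j (r ord0 j)].
have Pout : forall p r, P p r -> 0 < Fv r^T.
  move=> p r Pr; apply: (Fv_pos r^T).2; exists p.1.
  have := Pr p.1; rewrite /A eqxx mxE; case: p.2 => /=; rewrite in_itv /= => /andP[h1 h2].
    by right; lra.
  by left; lra.
have hT : forall p, exists T, forall t, (T <= t)%N -> ~ P p (v t)^T.
  move=> p.
  have [[r Pr]|Pe] := pselect (P p !=set0); last first.
    by exists 0%N => t _ Pt; apply: Pe; exists (v t)^T.
  have cP : compact (P p).
    apply: rV_compact => j; rewrite /A; case: (j == p.1); last exact: segment_compact.
    by case: p.2; exact: segment_compact.
  have cF : {within P p, continuous (fun r : 'rV[R]_n => Fv r^T)}.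
    by apply: continuous_subspaceT; exact: Phi_cont.
  have [c cin cmin] := compact_EVT_min (ex_intro _ r Pr) cP cF.
  rewrite inE in cin.
  have m0 := Pout _ _ cin.
  apply: (@avoid (fun w => P p w^T) (Fv c^T)) => // w Pw.
  by have := cmin w^T; rewrite inE trmxK => /(_ Pw).
have [T hTp] := choice hT.
pose T0 := (\max_p T p)%N.
exists T0 => // t /= tT.
have notP : forall p, ~ P p (v t)^T.
  move=> p; apply: hTp; apply: leq_trans tT; exact: leq_bigmax.
have close : forall i, vlo i - eps < v t i ord0 < vhi i + eps.
  move=> i; apply/andP; split; rewrite ltNge; apply/negP => h.
    apply: (notP (i, false)) => j; rewrite /A /= mxE.
    by move: (hB t j); case: eqP => [->|_] /= /andP[h1 h2]; rewrite in_itv /= ?h1 ?h2 ?h.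
  apply: (notP (i, true)) => j; rewrite /A /= mxE.
  by move: (hB t j); case: eqP => [->|_] /= /andP[h1 h2]; rewrite in_itv /= ?h1 ?h2 ?h.
pose q : 'cV[R]_n := \col_i (if v t i ord0 < vlo i then vlo i
    else if vhi i < v t i ord0 then vhi i else v t i ord0).
have qS : Sv vlo vhi q.
  move=> i; rewrite mxE; have := hlh i.
  case: ltP => h1; first by rewrite lexx.
  by case: ltP => h2 h3; rewrite ?lexx ?h1 ?h3 ?h2.
have qclose : forall i, `|(v t - q) i ord0| <= eps.
  move=> i; rewrite !mxE; have := close i; move=> /andP[c1 c2].
  case: ltP => h1.
    rewrite ler_norml; apply/andP; split; lra.
  case: ltP => h2; rewrite ler_norml; apply/andP; split; lra.
have dlb : 0 <= dist_Sv vlo vhi (v t).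
  apply: lb_le_inf; first by exists (enorm (v t - q)); exists q.
  by move=> x [w _ <-]; exact: sqrtr_ge0.
have dub : dist_Sv vlo vhi (v t) <= enorm (v t - q).
  apply: ge_inf; last by exists q.
  by exists 0 => x [w _ <-]; exact: sqrtr_ge0.
rewrite ger0_norm //.
apply: le_lt_trans dub _; apply: le_lt_trans (enorm_le _) _.
apply: le_lt_trans (ler_sum _ (fun i _ => qclose i)) _.
rewrite sumr_const card_ord -mulr_natr /eps mulrAC ltr_pdivrMr ?ltr0n // ltr_pM2l // ltr_nat.
exact: ltnSn.
Qed.
End Main.

Theorem theorem1 (R : realType) (n : nat) (X : 'M[R]_n) (dT : R)
  (vlo vhi : 'I_n -> R) (g : 'I_n -> R -> R) :
  (0 < n)%N ->
  posdef X ->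
  0 < dT ->
  (forall i, vlo i <= vhi i) ->
  (forall i, C1 (g i)) ->
  (forall i x, vlo i <= x <= vhi i -> g i x = 0) ->
  (forall v : 'cV[R]_n,
     (forall i, v i ord0 < vlo i \/ vhi i < v i ord0) ->
     loewner_lt (- (2 / dT) *: invmx X) (dudv g v) /\
     loewner_lt (dudv g v) 0) ->
  (forall i, (fun x => `|g i x|) @ +oo --> +oo /\
             (fun x => `|g i x|) @ -oo --> +oo) ->
  forall v : nat -> 'cV[R]_n,
    (forall t : nat, v t.+1 = v t + dT *: (X *m ctrl g (v t))) ->
    (fun t => dist_Sv vlo vhi (v t)) @ \oo --> 0.
Proof.
move=> n0 hX hdT hlh hC1 hg0 hL _ v hv.
exact: (@main_conv R n X dT vlo vhi g hX hdT hlh hC1 hg0 hL v n0 hv).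
Qed.
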